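(* There is an absolute constant $c>0$ such that the following holds. Let $q$ and $p$ be positive integers, let $\delta=p-q/2$ (so $p=q/2+\delta$), let $W\subseteq\{0,1,\dots,q-1\}$, let $Q>0$ with $Q|\delta|<q/3$, and let $b$ be an integer with $|2b|<Q$. Then $$\left|f_W\left(\frac{2b}{q}\right)-f_W\left(\frac{b}{p}\right)\right|\ \le\ c\,\frac{|\delta| Q |W|}{q}.$$
   Context: $e(u)=\exp(2\pi i u)$ and, for a finite set of integers $W$, $f_W(t)=\sum_{s\in W}e(st)$. *)

(* Defs.v *)
From Stdlib Require Import Reals List.
From Coquelicot Require Import Coquelicot.
Open Scope R_scope.

Definition e (u : R) : C := (cos (2 * PI * u), sin (2 * PI * u)).

(* f_W(t) = sum_{s in W} e(s t), W a finite set of naturals given as a duplicate-free list *)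
Definition fW (W : list nat) (t : R) : C :=
  fold_right Cplus 0%C (map (fun s => e (INR s * t)) W).

(* Main.v *)
Require Import Defs.
From Stdlib Require Import Reals List ZArith Lra Lia.
From Coquelicot Require Import Coquelicot.
Open Scope R_scope.

Lemma lip_sin (a b : R) : Rabs (sin a - sin b) <= Rabs (a - b).
Proof.
  destruct (MVT_abs sin cos b a) as [c [H _]].
  { intros; apply derivable_pt_lim_sin. }
  rewrite H. pose proof (COS_bound c).
  rewrite <- (Rmult_1_l (Rabs (a - b))) at 2.
  apply Rmult_le_compat_r; [apply Rabs_pos|]. apply Rabs_le; lra.
Qed.

Lemma lip_cos (a b : R) : Rabs (cos a - cos b) <= Rabs (a - b).
Proof.
  destruct (MVT_abs cos (fun x => - sin x) b a) as [c [H _]].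
  { intros; apply derivable_pt_lim_cos. }
  rewrite H. pose proof (SIN_bound c).
  rewrite <- (Rmult_1_l (Rabs (a - b))) at 2.
  apply Rmult_le_compat_r; [apply Rabs_pos|]. apply Rabs_le; lra.
Qed.

Lemma Cmod_le_sum (x y : R) : Cmod (x, y) <= Rabs x + Rabs y.
Proof.
  replace (x, y) with (Cplus (x, 0) (0, y)).
  2:{ unfold Cplus; simpl; f_equal; ring. }
  eapply Rle_trans; [apply Cmod_triangle|].
  unfold Cmod; simpl.
  apply Rplus_le_compat; [|].
  - replace (x * (x * 1) + 0 * (0 * 1)) with (x*x) by ring. rewrite <- (sqrt_Rsqr_abs); unfold Rsqr; lra.
  - replace (0 * (0 * 1) + y * (y * 1)) with (y*y) by ring. rewrite <- (sqrt_Rsqr_abs); unfold Rsqr; lra.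
Qed.

Lemma e_lip (x y : R) : Cmod (Cminus (e x) (e y)) <= 4 * PI * Rabs (x - y).
Proof.
  unfold e, Cminus, Cplus, Copp; simpl.
  eapply Rle_trans; [apply Cmod_le_sum|].
  pose proof (lip_cos (2*PI*x) (2*PI*y)).
  pose proof (lip_sin (2*PI*x) (2*PI*y)).
  replace (2*PI*x - 2*PI*y) with ((2*PI)*(x-y)) in * by ring.
  rewrite Rabs_mult in *. rewrite (Rabs_right (2*PI)) in * by (pose proof PI_RGT_0; lra).
  unfold Rminus in *. lra.
Qed.

Lemma fW_bound (W : list nat) (t1 t2 M : R) :
  (forall s, In s W -> Cmod (Cminus (e (INR s * t1)) (e (INR s * t2))) <= M) ->
  Cmod (Cminus (fW W t1) (fW W t2)) <= INR (length W) * M.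
Proof.
  induction W as [|s W IH]; intros H.
  - unfold fW; simpl. unfold Cminus, Cplus, Copp, Cmod; simpl.
    replace ((0 + - 0) * ((0 + - 0) * 1) + (0 + - 0) * ((0 + - 0) * 1)) with 0 by ring.
    rewrite sqrt_0; lra.
  - unfold fW in *; simpl map; simpl fold_right.
    replace (Cminus (Cplus (e (INR s * t1)) (fold_right Cplus 0%C (map (fun s0 : nat => e (INR s0 * t1)) W)))
      (Cplus (e (INR s * t2)) (fold_right Cplus 0%C (map (fun s0 : nat => e (INR s0 * t2)) W))))
    with (Cplus (Cminus (e (INR s * t1)) (e (INR s * t2)))
       (Cminus (fold_right Cplus 0%C (map (fun s0 : nat => e (INR s0 * t1)) W))
               (fold_right Cplus 0%C (map (fun s0 : nat => e (INR s0 * t2)) W)))).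
    2:{ destruct (e (INR s * t1)), (e (INR s * t2)),
          (fold_right Cplus 0%C (map (fun s0 : nat => e (INR s0 * t1)) W)),
          (fold_right Cplus 0%C (map (fun s0 : nat => e (INR s0 * t2)) W)).
        unfold Cminus, Cplus, Copp; simpl; f_equal; ring. }
    eapply Rle_trans; [apply Cmod_triangle|].
    rewrite length_cons, S_INR.
    pose proof (H s (or_introl eq_refl)).
    pose proof (IH (fun s' Hs => H s' (or_intror Hs))). lra.
Qed.

Lemma term_bound (q p s : nat) (Q : R) (b : Z) :
  (0 < q)%nat -> (0 < p)%nat -> (s < q)%nat -> 0 < Q ->
  Q * Rabs (INR p - INR q / 2) < INR q / 3 ->
  Rabs (2 * IZR b) < Q ->
  Rabs (INR s * (2 * IZR b / INR q) - INR s * (IZR b / INR p))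
    <= 3 * (Rabs (INR p - INR q / 2) * Q) / INR q.
Proof.
  intros Hq Hp Hs HQ H1 H2.
  assert (qq0 : 0 < INR q) by (apply lt_0_INR; lia).
  assert (pp0 : 0 < INR p) by (apply lt_0_INR; lia).
  assert (xq : INR s <= INR q) by (apply le_INR; lia).
  assert (x0 : 0 <= INR s) by apply pos_INR.
  assert (Hd0 : 0 <= Rabs (INR p - INR q / 2)) by apply Rabs_pos.
  assert (RHS0 : 0 <= 3 * (Rabs (INR p - INR q / 2) * Q) / INR q).
  { apply Rmult_le_pos; [|left; apply Rinv_0_lt_compat; lra]. nra. }
  destruct (Z.eq_dec b 0) as [->|Hb].
  - replace (INR s * (2 * IZR 0 / INR q) - INR s * (IZR 0 / INR p)) with 0
      by (simpl; field; lra).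
    rewrite Rabs_R0; lra.
  - assert (HB : 1 <= Rabs (IZR b)).
    { destruct (Z_lt_le_dec b 0).
      + assert (IZR b <= -1) by (apply IZR_le; lia).
        rewrite Rabs_left by lra; lra.
      + assert (1 <= IZR b) by (apply IZR_le; lia).
        rewrite Rabs_right by lra; lra. }
    rewrite Rabs_mult in H2. rewrite (Rabs_right 2) in H2 by lra.
    assert (Q > 2) by lra.
    assert (Rabs (INR p - INR q / 2) < INR q / 6) by nra.
    assert (INR q <= 3 * INR p).
    { pose proof (Rle_abs (-(INR p - INR q / 2))) as H4. rewrite Rabs_Ropp in H4. lra. }
    replace (INR s * (2 * IZR b / INR q) - INR s * (IZR b / INR p))
      with (INR s * (2 * IZR b) * (INR p - INR q / 2) / (INR q * INR p)) by (field; lra).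
    unfold Rdiv. rewrite !Rabs_mult, Rabs_inv, Rabs_mult.
    rewrite (Rabs_right (INR s)), (Rabs_right (INR q)), (Rabs_right (INR p)), (Rabs_right 2) by lra.
    rewrite Rinv_mult.
    assert (A : INR s * (2 * Rabs (IZR b)) * Rabs (INR p - INR q / 2) <= INR q * Q * Rabs (INR p - INR q / 2)).
    { apply Rmult_le_compat_r; [lra|]. apply Rmult_le_compat; nra. }
    assert (B : / INR p <= 3 * / INR q).
    { apply (Rmult_le_reg_l (INR p * INR q)); [nra|].
      field_simplify; lra. }
    assert (0 < / INR q) by (apply Rinv_0_lt_compat; lra).
    assert (0 < / INR p) by (apply Rinv_0_lt_compat; lra).
    apply Rle_trans with (INR q * Q * Rabs (INR p - INR q / 2) * (/ INR q * / INR p)).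
    { apply Rmult_le_compat_r; [nra|exact A]. }
    replace (INR q * Q * Rabs (INR p - INR q / 2) * (/ INR q * / INR p)) with (Q * Rabs (INR p - INR q / 2) * / INR p)
      by (field; lra).
    apply Rle_trans with (Q * Rabs (INR p - INR q / 2) * (3 * / INR q)).
    { apply Rmult_le_compat_l; nra. }
    lra.
Qed.

Theorem lemma2 :
  exists c : R, 0 < c /\
  forall (q p : nat) (W : list nat) (Q : R) (b : Z),
    (0 < q)%nat -> (0 < p)%nat ->
    NoDup W -> List.Forall (fun s => (s < q)%nat) W ->
    0 < Q ->
    Q * Rabs (INR p - INR q / 2) < INR q / 3 ->
    Rabs (2 * IZR b) < Q ->
    Cmod (Cminus (fW W (2 * IZR b / INR q)) (fW W (IZR b / INR p)))
      <= c * (Rabs (INR p - INR q / 2) * Q * INR (length W) / INR q).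
Proof.
  exists 48. split; [lra|].
  intros q p W Q b Hq Hp _ HW HQ H1 H2.
  assert (qq0 : 0 < INR q) by (apply lt_0_INR; lia).
  assert (HPI := PI_4). assert (HPI0 := PI_RGT_0).
  eapply Rle_trans.
  { apply (fW_bound W _ _ (4 * PI * (3 * (Rabs (INR p - INR q / 2) * Q) / INR q))).
    intros s Hs. eapply Rle_trans; [apply e_lip|].
    apply Rmult_le_compat_l; [lra|].
    apply term_bound; auto. rewrite Forall_forall in HW; auto. }
  assert (0 <= Rabs (INR p - INR q / 2) * Q * INR (length W) / INR q).
  { apply Rmult_le_pos; [|left; apply Rinv_0_lt_compat; lra].
    apply Rmult_le_pos; [|apply pos_INR]. apply Rmult_le_pos; [apply Rabs_pos|lra]. }
  replace (INR (length W) * (4 * PI * (3 * (Rabs (INR p - INR q / 2) * Q) / INR q)))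
    with ((12 * PI) * (Rabs (INR p - INR q / 2) * Q * INR (length W) / INR q)) by (field; lra).
  apply Rmult_le_compat_r; lra.
Qed.
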